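(* Let $\mathcal{F}\subseteq\mathcal{P}(\omega)$ be a free filter that is non-meager. Then there is a countable dense set $D\subseteq C_p(\xi(\mathcal{F}))$ such that for every crowded $P\subseteq D$ there is a crowded subset $Q\subseteq P$ whose closure in $C_p(\xi(\mathcal{F}))$ is compact.
   Context: A filter on $\omega$ is free if it contains all cofinite sets; it is non-meager if it is not a meager subset of the Cantor set $2^\omega$ (subsets of $\omega$ identified with characteristic functions). $\xi(\mathcal{F})$ is the space $\omega\cup\{\infty\}$ in which every point of $\omega$ is isolated and the neighborhoods of $\infty$ are the sets $\{\infty\}\cup A$ with $A\in\mathcal{F}$. $C_p(X)$ is the space of continuous functions $X\to\mathbb{R}$ with the pointwise convergence topology. A space is crowded if it is non-empty and has no isolated points. *)

(* Defs.v *)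
From HB Require Import structures.
From mathcomp Require Import all_boot all_order all_algebra.
From mathcomp Require Import all_classical all_reals all_analysis.
Import Order.TTheory GRing.Theory Num.Theory.
Import numFieldTopology.Exports numFieldNormedType.Exports.
Local Open Scope classical_set_scope.
Local Open Scope ring_scope.

Definition is_filter_on_nat (F : set (set nat)) : Prop :=
  [/\ F setT, ~ F set0,
      (forall A B, F A -> A `<=` B -> F B) &
      (forall A B, F A -> F B -> F (A `&` B))].

Definition free_filter (F : set (set nat)) : Prop :=
  is_filter_on_nat F /\ forall A : set nat, finite_set (~` A) -> F A.

Definition nowhere_dense_cantor (A : set cantor_space) : Prop :=
  interior (closure A) = set0.

Definition meager_cantor (S : set cantor_space) : Prop :=
  exists N : nat -> set cantor_space,
    (forall n, nowhere_dense_cantor (N n)) /\ S `<=` \bigcup_n N n.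

(* F viewed as a subset of 2^omega via characteristic functions *)
Definition filter_in_cantor (F : set (set nat)) : set cantor_space :=
  [set f : cantor_space | F [set n | f n = true]].

Definition non_meager_filter (F : set (set nat)) : Prop :=
  ~ meager_cantor (filter_in_cantor F).

(* The space xi(F) = omega ∪ {∞}: points are [option nat], with
   [Some n] = n ∈ omega and [None] = ∞.  Points of omega are isolated;
   the neighbourhoods of ∞ are {∞} ∪ A, A ∈ F. *)
Definition xi_open (F : set (set nat)) (U : set (option nat)) : Prop :=
  U None -> exists A, F A /\ forall n, A n -> U (Some n).

Definition xi_continuous (R : realType) (F : set (set nat))
    (f : option nat -> R) : Prop :=
  forall V : set R, open V -> xi_open F (f @^-1` V).

(* C_p(xi(F)): the continuous real functions on xi(F), as a subset of the
   space of all functions with the pointwise-convergence (product) topology. *)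
Definition Cp_xi (R : realType) (F : set (set nat)) : set {ptws option nat -> R} :=
  [set f | @xi_continuous R F f].

Definition crowded {T : topologicalType} (P : set T) : Prop :=
  P !=set0 /\ P `<=` limit_point P.

(* Main.v *)
From Stdlib Require List.
Require Import Defs.
From HB Require Import structures.
From mathcomp Require Import all_boot all_order all_algebra.
From mathcomp Require Import all_classical all_reals all_analysis.
From mathcomp Require Import lra.
Import Order.TTheory GRing.Theory Num.Theory.
Import numFieldTopology.Exports numFieldNormedType.Exports.
Local Open Scope classical_set_scope.
Local Open Scope ring_scope.

Lemma ptws_seq_cvg (I : Type) (V : topologicalType) (u : nat -> {ptws I -> V}) (f : {ptws I -> V}) :
  (forall i, (fun n => u n i) @ \oo --> f i) -> u @ \oo --> f.
Proof.
move=> H; apply/cvg_sup => i U [V'] [[W] oW <-] Wf WU.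
apply: (filterS WU); rewrite nbhs_simpl.
have := H i W; rewrite nbhs_simpl; apply.
exact: open_nbhs_nbhs.
Qed.

Lemma ptws_proj_nbhs (I : eqType) (V : topologicalType) (f : {ptws I -> V}) i (W : set V) :
  nbhs (f i) W -> nbhs f [set g : {ptws I -> V} | W (g i)].
Proof. move=> h; exact: (@proj_continuous I (fun _ => V) i f _ h). Qed.
Lemma m_ge {m : nat -> nat} : (forall k, (m k < m k.+1)%N) -> forall k, (k <= m k)%N.
Proof. move=> hm; elim=> [//|k IH]; exact: leq_ltn_trans IH (hm k). Qed.

Lemma m_mono {m : nat -> nat} : (forall k, (m k < m k.+1)%N) ->
  forall i j, (i <= j)%N -> (m i <= m j)%N.
Proof.
move=> hm i j /subnKC <-; elim: (j - i)%N => [|d IH]; first by rewrite addn0.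
by rewrite addnS; apply: leq_trans IH (ltnW (hm _)).
Qed.

Definition ee (R : realType) (k : nat) : R := (2^-1) ^+ k.

Lemma ee_gt0 (R : realType) k : 0 < ee R k.
Proof. by rewrite /ee exprn_gt0 // invr_gt0. Qed.

Lemma ee_S (R : realType) k : ee R k.+1 *+ 2 = ee R k.
Proof. by rewrite /ee exprS -mulrnAl -mulr_natr mulVf ?mul1r // pnatr_eq0. Qed.

Lemma ee_le1 (R : realType) k : ee R k <= 1.
Proof. by rewrite /ee exprn_ile1 // ?invr_ge0 ?ler0n // invf_le1 // ler1n. Qed.

Lemma ee_Sle (R : realType) k : ee R k.+1 <= ee R k.
Proof. by rewrite -[X in _ <= X]ee_S mulr2n lerDl ltW // ee_gt0. Qed.

Lemma ee_mono (R : realType) i j : (i <= j)%N -> ee R j <= ee R i.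
Proof.
move=> /subnKC <-; elim: (j - i)%N => [|d IH]; first by rewrite addn0.
by rewrite addnS; apply: le_trans (ee_Sle _ _) IH.
Qed.

Lemma ee_cvg (R : realType) : ee R @ \oo --> 0.
Proof. apply: cvg_expr; rewrite ger0_norm ?invr_ge0 ?ler0n // invf_lt1 // ?ltr1n //. Qed.

Lemma cantor_prefix_nbhs (h : cantor_space) (L : nat) :
  nbhs h [set f : cantor_space | forall i, (i < L)%N -> f i = h i].
Proof.
elim: L => [|L IH].
  by apply: filterS filterT => f _ i.
have H1 : nbhs h [set f : cantor_space | f L = h L].
  apply: (@ptws_proj_nbhs nat bool h L [set h L]).
  by apply/principal_filterP.
apply: filterS (filterI IH H1) => f [H2 H3] i; rewrite ltnS leq_eqVlt.
by case/orP => [/eqP -> //|/H2].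
Qed.

Lemma talagrand (F : set (set nat)) (m : nat -> nat) :
  non_meager_filter F -> (forall k, (m k < m k.+1)%N) ->
  exists A, F A /\ forall N, exists k, (N <= k)%N /\
     forall n, (m k <= n)%N -> (n < m k.+1)%N -> ~ A n.
Proof.
move=> nm hm; apply: contrapT => hcon; apply: nm.
pose M N := [set f : cantor_space | forall k, (N <= k)%N ->
   exists n, [/\ (m k <= n)%N, (n < m k.+1)%N & f n = true]].
exists M; split; last first.
  move=> f Ff; apply: contrapT => hnf.
  apply: hcon; exists [set n | f n = true]; split => // N.
  apply: contrapT => hN; apply: hnf; exists N => //= k Nk.
  apply: contrapT => hk; apply: hN; exists k; split => // n h1 h2 fn.
  by apply: hk; exists n.
move=> N; rewrite /nowhere_dense_cantor; apply/seteqP; split => // g hg.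
rewrite /interior /= in hg.
pose h (t : nat) : cantor_space := fun i => if (i < t)%N then g i else false.
have hcv : h @ \oo --> g.
  apply: ptws_seq_cvg => i W Wg; rewrite nbhs_simpl /=.
  exists i.+1 => // t /= it; rewrite /h it; exact: nbhs_singleton.
have [t0 _ Ht] := hcv _ hg.
have := Ht t0 (leqnn _) => /= clt.
pose k := maxn N t0.
have := clt _ (cantor_prefix_nbhs (h t0) (m k.+1)).
case=> f [Mf Wf].
have [n [n1 n2 fn]] := Mf k (leq_maxl _ _).
have := Wf n n2; rewrite /h fn.
have : (t0 <= n)%N.
  apply: (leq_trans _ n1); apply: (leq_trans _ (m_ge hm _)); exact: leq_maxr.
by rewrite leqNgt => /negbTE ->.
Qed.

Section Construction.
Variables (R : realType) (P : set {ptws option nat -> R}).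
Local Notation T := {ptws option nat -> R}.
Variables (q0 : T) (ch : T -> nat -> nat -> T) (sup : T -> nat).
Hypothesis Hq0 : P q0.
Hypothesis Hsup : forall q, P q -> forall n, (sup q <= n)%N -> q (Some n) = q None.
Hypothesis Hch : forall q L k, P q -> [/\ P (ch q L k), ch q L k <> q,
   `|ch q L k None - q None| < ee R k.+1 &
   forall n, (n < L)%N -> `|ch q L k (Some n) - q (Some n)| < ee R k.+1].

Definition mxs (L : seq T) : nat := foldr (fun q acc => maxn (sup q) acc) 0%N L.

Lemma mxs_ge L q : List.In q L -> (sup q <= mxs L)%N.
Proof.
elim: L => [//|a L IH] /= [->|/IH h]; first exact: leq_maxl.
exact: leq_trans h (leq_maxr _ _).
Qed.

Fixpoint lvl (k : nat) : seq T * nat :=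
  match k with
  | 0%N => ([:: q0], (sup q0).+1)
  | k'.+1 => let L := (lvl k').1 in let m := (lvl k').2 in
      let L' := L ++ map (fun q => ch q m k') L in (L', maxn m.+1 (mxs L'))
  end.

Definition Ls k := (lvl k).1.
Definition mm k := (lvl k).2.

Lemma Ls_S x k : List.In x (Ls k.+1) <->
  List.In x (Ls k) \/ exists p, List.In p (Ls k) /\ x = ch p (mm k) k.
Proof.
rewrite /Ls /= List.in_app_iff List.in_map_iff; split.
  by case=> [h|[p [<- hp]]]; [left|right; exists p].
by case=> [h|[p [hp ->]]]; [left|right; exists p].
Qed.

Lemma mm_S k : (mm k < mm k.+1)%N.
Proof. by rewrite /mm /= leq_maxl. Qed.

Lemma Ls_sup k x : List.In x (Ls k) -> (sup x <= mm k)%N.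
Proof.
case: k => [|k] /=.
  by rewrite /Ls /mm /= => -[<-|//]; exact: leqnSn.
move=> h; rewrite /mm /=; apply: leq_trans (leq_maxr _ _); exact: mxs_ge.
Qed.

Lemma Ls_P k x : List.In x (Ls k) -> P x.
Proof.
elim: k x => [|k IH] x; first by rewrite /Ls /= => -[<-|].
by case/Ls_S => [/IH //|[p [/IH hp ->]]]; have [] := Hch p (mm k) k hp.
Qed.

Lemma Ls_mono k k' x : (k <= k')%N -> List.In x (Ls k) -> List.In x (Ls k').
Proof.
move=> /subnKC <-; elim: (k' - k)%N => [|d IH]; first by rewrite addn0.
by move=> h; rewrite addnS; apply/Ls_S; left; exact: IH.
Qed.

Lemma Ls_const k x n : List.In x (Ls k) -> (mm k <= n)%N -> x (Some n) = x None.
Proof.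
move=> h hn; apply: Hsup; first exact: Ls_P _ _ h.
exact: leq_trans (Ls_sup _ _ h) hn.
Qed.

Lemma ee_S2 k : ee R k = ee R k.+1 + ee R k.+1.
Proof. by rewrite -ee_S mulr2n. Qed.

Definition sumL (L : seq T) c : R := foldr (fun q acc => `|q c| + acc) 0 L.

Lemma sumL_ge0 L c : 0 <= sumL L c.
Proof. elim: L => [|a L IH] //=; exact: addr_ge0. Qed.

Lemma sumL_ge L c q : List.In q L -> `|q c| <= sumL L c.
Proof.
elim: L => [//|a L IH] /= [->|/IH h].
  by rewrite lerDl sumL_ge0.
by apply: le_trans h _; rewrite lerDr.
Qed.

Definition frz c k0 := match c with None => true | Some n => (n < mm k0)%N end.

Lemma ch_close p k c : P p -> frz c k ->
  `|ch p (mm k) k c - p c| < ee R k.+1.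
Proof.
move=> hp; have [_ _ h1 h2] := Hch p (mm k) k hp.
by case: c => [n /= hn|//]; exact: h2.
Qed.

Lemma frz_mono {c k k'} : (k <= k')%N -> frz c k -> frz c k'.
Proof.
case: c => [n|//] /= hk hn; exact: leq_trans hn (m_mono mm_S _ _ hk).
Qed.

Lemma Ls_abs k0 c d x : frz c k0 -> List.In x (Ls (k0 + d)) ->
  `|x c| <= sumL (Ls k0) c + ee R k0 - ee R (k0 + d).
Proof.
move=> hf; elim: d x => [|d IH] x.
  by rewrite addn0 addrK; exact: sumL_ge.
rewrite addnS => /Ls_S [h|[p [hp ->]]].
  apply: le_trans (IH _ h) _; rewrite lerD2l lerN2; exact: ee_Sle.
have hP := Ls_P _ _ hp.
have hc := ch_close p (k0 + d)%N c hP (frz_mono (leq_addr d k0) hf).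
have := ler_normD (p c) (ch p (mm (k0 + d)%N) (k0 + d)%N c - p c).
rewrite addrC subrK => htri.
have := IH _ hp; have := ee_S2 (k0 + d)%N; lra.
Qed.

Definition k0of (c : option nat) := match c with None => 0%N | Some n => n.+1 end.
Definition bnd c : R := sumL (Ls (k0of c)) c + 1.

Lemma frz_k0of c : frz c (k0of c).
Proof.
case: c => [n|//] /=; exact: leq_trans (m_ge mm_S n.+1).
Qed.

Lemma Ls_bnd k x c : List.In x (Ls k) -> `|x c| <= bnd c.
Proof.
move=> h; have h' := Ls_mono _ _ _ (leq_maxl k (k0of c)) h.
rewrite -(subnKC (leq_maxr k (k0of c))) in h'.
have := Ls_abs _ _ _ _ (frz_k0of c) h'.
have := ee_le1 R (k0of c); have := ee_gt0 R (k0of c + (maxn k (k0of c) - k0of c)).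
rewrite /bnd; lra.
Qed.

Variable kb : nat -> bool.

Fixpoint Gl (k : nat) : seq T :=
  match k with
  | 0%N => [:: q0]
  | k'.+1 => Gl k' ++ (if kb k' then map (fun q => ch q (mm k') k') (Gl k') else [::])
  end.

Lemma Gl_S x k : List.In x (Gl k.+1) <->
  List.In x (Gl k) \/ (kb k /\ exists p, List.In p (Gl k) /\ x = ch p (mm k) k).
Proof.
rewrite /= List.in_app_iff; case: (kb k) => /=; last first.
  by split; [case=> // h; left|case=> [h|[]//]; left].
rewrite List.in_map_iff; split.
  by case=> [h|[p [<- hp]]]; [left|right; split=> //; exists p].
by case=> [h|[_ [p [hp ->]]]]; [left|right; exists p].
Qed.

Lemma Gl_Ls k x : List.In x (Gl k) -> List.In x (Ls k).
Proof.
elim: k x => [//|k IH] x /Gl_S [h|[_ [p [hp ->]]]]; apply/Ls_S.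
  by left; exact: IH.
by right; exists p; split => //; exact: IH.
Qed.

Lemma Gl_mono k k' x : (k <= k')%N -> List.In x (Gl k) -> List.In x (Gl k').
Proof.
move=> /subnKC <-; elim: (k' - k)%N => [|d IH]; first by rewrite addn0.
by move=> h; rewrite addnS; apply/Gl_S; left; exact: IH.
Qed.

Lemma Gl_dev k x i n : List.In x (Gl k) -> ~~ kb i -> (mm i <= n)%N ->
  (n < mm i.+1)%N -> (i < k)%N ->
  `|x (Some n) - x None| <= ee R i *+ 2 - ee R k *+ 2.
Proof.
move=> + hi hn1 hn2; elim: k x => [//|k IH] x /Gl_S [h|[kbk [p [hp ->]]]].
  rewrite ltnS leq_eqVlt => /orP [/eqP ik|ik].
    rewrite ik in hn1; rewrite (Ls_const _ _ _ (Gl_Ls _ _ h) hn1) subrr normr0.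
    have := ee_Sle R k; rewrite ik !mulr2n; lra.
  have := IH _ h ik; have := ee_Sle R k; rewrite !mulr2n; lra.
move=> ik'.
have ik : (i < k)%N.
  rewrite ltn_neqAle; apply/andP; split; last by rewrite -ltnS.
  by apply/eqP => ik; rewrite ik kbk in hi.
have hP := Ls_P _ _ (Gl_Ls _ _ hp).
have hnk : frz (Some n) k.
  by rewrite /=; apply: leq_trans hn2 (m_mono mm_S _ _ ik).
have e1 := ch_close p k (Some n) hP hnk.
have e2 := ch_close p k None hP erefl.
have IHp := IH _ hp ik.
set xn := ch p (mm k) k (Some n) in e1 *.
set xi := ch p (mm k) k None in e2 *.
have t1 := ler_normD (xn - p (Some n)) ((p (Some n) - p None) + (p None - xi)).
have t2 := ler_normD (p (Some n) - p None) (p None - xi).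
have -> : xn - xi = (xn - p (Some n)) + ((p (Some n) - p None) + (p None - xi)).
  by rewrite !addrA subrK subrK.
rewrite (distrC (p None)) in t2.
have := ee_S2 k; move: t1 t2 e1 e2 IHp; rewrite !mulr2n; lra.
Qed.

Lemma Gl_dev2 k x i n : List.In x (Gl k) -> ~~ kb i -> (mm i <= n)%N ->
  (n < mm i.+1)%N -> `|x (Some n) - x None| <= ee R i *+ 2.
Proof.
move=> h hi hn1 hn2; case: (ltnP i k) => ik.
  apply: le_trans (Gl_dev _ _ _ _ h hi hn1 hn2 ik) _.
  by rewrite lerBlDr lerDl mulrn_wge0 // ltW // ee_gt0.
rewrite (Ls_const _ _ _ (Gl_Ls _ _ h)) ?subrr ?normr0 ?mulrn_wge0 ?ltW ?ee_gt0 //.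
exact: leq_trans (m_mono mm_S _ _ ik) hn1.
Qed.

Definition Qs : set T := [set x | exists k, List.In x (Gl k)].

Lemma Qs_P : Qs `<=` P.
Proof. by move=> x [k h]; exact: Ls_P _ _ (Gl_Ls _ _ h). Qed.

Hypothesis kinf : forall N, exists k, (N <= k)%N /\ kb k.

Lemma Qs_crowded : crowded Qs.
Proof.
split; first by exists q0; exists 0%N; left.
move=> q [k hq] U hU.
have hP : P q := Qs_P q (ex_intro _ k hq).
have /choice [kt hkt] : forall t : nat, exists kk, (maxn k t <= kk)%N /\ kb kk.
  by move=> t; exact: kinf.
pose y t := ch q (mm (kt t)) (kt t).
have hy : y @ \oo --> q.
  apply: ptws_seq_cvg => c; apply/cvgrPdist_lt => eps heps.
  have := ee_cvg R; move=> /cvgrPdist_lt /(_ eps heps) [N _ hN].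
  exists (maxn N (k0of c)) => // t /= ht.
  have htk : (t <= kt t)%N.
    by apply: leq_trans (leq_maxr k t) (proj1 (hkt t)).
  have hf : frz c (kt t).
    apply: (frz_mono _ (frz_k0of c)).
    by apply: leq_trans htk; apply: leq_trans ht; exact: leq_maxr.
  rewrite distrC; have h0 := ch_close q (kt t) c hP hf.
  have h1 : ee R (kt t).+1 <= ee R t := ee_mono R _ _ (leq_trans htk (leqnSn _)).
  have h2 := hN t (leq_trans (leq_maxl _ _) ht).
  rewrite /= sub0r normrN ger0_norm in h2; last exact: ltW (ee_gt0 _ _).
  rewrite /y; lra.
have [N _ hN] := hy U hU.
have := hN N (leqnn N) => /= hUN.
exists (y N); split => //.
  by apply/eqP; have [] := Hch q (mm (kt N)) (kt N) hP.
exists (kt N).+1; apply/Gl_S; right; split; first exact: (proj2 (hkt N)).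
exists q; split => //; apply: Gl_mono hq.
by apply: leq_trans (leq_maxl k N) (proj1 (hkt N)).
Qed.

End Construction.

Lemma ptws_ball_nbhs {R : realType} (g : {ptws option nat -> R}) a {d : R} :
  0 < d -> nbhs g [set h : {ptws option nat -> R} | `|g a - h a| < d].
Proof.
move=> hd; apply: (@ptws_proj_nbhs (option nat) R g a [set x | `|g a - x| < d]).
exact: (nbhsx_ballx (g a) d hd).
Qed.

Lemma closure_dev (R : realType) (Q : set {ptws option nat -> R}) a b r g :
  (forall h, Q h -> `|h a - h b| <= r) -> closure Q g -> `|g a - g b| <= r.
Proof.
move=> hQ hg; rewrite leNgt; apply/negP => hlt.
pose d := (`|g a - g b| - r) / 2.
have hd : 0 < d by rewrite /d divr_gt0 // subr_gt0.
have hd2 : d * 2 = `|g a - g b| - r by rewrite /d mulfVK // pnatr_eq0.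
clearbody d.
have [h [Qh [h1 h2]]] := hg _ (filterI (ptws_ball_nbhs g a hd) (ptws_ball_nbhs g b hd)).
have := hQ h Qh.
have t1 := ler_normD (g a - h a) ((h a - h b) + (h b - g b)).
have t2 := ler_normD (h a - h b) (h b - g b).
have e : (g a - h a) + ((h a - h b) + (h b - g b)) = g a - g b.
  by rewrite !addrA subrK subrK.
rewrite e in t1; rewrite (distrC (h b)) in t2.
move: h1 h2 => /= h1 h2; lra.
Qed.

Lemma closure_abs (R : realType) (Q : set {ptws option nat -> R}) a r g :
  (forall h, Q h -> `|h a| <= r) -> closure Q g -> `|g a| <= r.
Proof.
move=> hQ hg; rewrite leNgt; apply/negP => hlt.
pose d := (`|g a| - r).
have hd : 0 < d by rewrite /d subr_gt0.
have hd2 : d = `|g a| - r by [].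
clearbody d.
have [h [Qh h1]] := hg _ (ptws_ball_nbhs g a hd).
have := hQ h Qh.
have t1 := ler_normD (g a - h a) (h a).
rewrite subrK in t1.
move: h1 => /= h1; lra.
Qed.

Lemma seq_closure (T : topologicalType) (S : set T) (u : nat -> T) f :
  u @ \oo --> f -> (forall t, S (u t)) -> closure S f.
Proof.
move=> hu hS B hB; have [N _ hN] := hu B hB.
by exists (u N); split => //; exact: hN (leqnn N).
Qed.

Lemma ptws_box_nbhs {R : realType} (q : {ptws option nat -> R}) L (d : R) :
  0 < d -> nbhs q [set h : {ptws option nat -> R} | `|q None - h None| < d /\
     forall n, (n < L)%N -> `|q (Some n) - h (Some n)| < d].
Proof.
move=> hd; elim: L => [|L IH].
  by apply: filterS (ptws_ball_nbhs q None hd) => h hh; split.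
apply: filterS (filterI IH (ptws_ball_nbhs q (Some L) hd)) => h [[h1 h2] h3].
split => // n; rewrite ltnS leq_eqVlt => /orP [/eqP -> //|]; exact: h2.
Qed.

Lemma box_compact (R : realType) (b : option nat -> R) :
  compact [set g : {ptws option nat -> R} | forall c, `|g c| <= b c].
Proof.
have := @tychonoff (option nat) (fun _ => R) (fun c => `[- b c, b c]%classic)
  (fun c => @segment_compact R (- b c) (b c)).
congr compact; apply/seteqP; split => g /= h c; have := h c;
  by rewrite /= in_itv /= ler_norml.
Qed.

Lemma cofin (F : set (set nat)) N : free_filter F -> F [set n | (N <= n)%N].
Proof.
move=> [_ hF]; apply: hF; rewrite (_ : ~` _ = `I_N); first exact: finite_II.
by apply/seteqP; split => n /=; rewrite ltnNge => /negP.
Qed.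

Definition mkD (R : realType) (s : seq rat * rat) : {ptws option nat -> R} :=
  fun c => match c with None => ratr s.2 | Some n => ratr (nth s.2 s.1 n) end.

Definition Dset (R : realType) : set {ptws option nat -> R} := range (mkD R).

Lemma Dset_countable R : countable (Dset R).
Proof. exact: sub_countable (card_image_le _ _) (countableP _). Qed.

Lemma Dset_const R q : Dset R q -> exists N, forall n, (N <= n)%N -> q (Some n) = q None.
Proof.
case=> s _ <-; exists (size s.1) => n hn /=; by rewrite nth_default.
Qed.

Lemma Dset_Cp R F : free_filter F -> Dset R `<=` Cp_xi R F.
Proof.
move=> hF q [s _ <-] V oV hV; exists [set n | (size s.1 <= n)%N]; split.
  exact: cofin.
by move=> n hn /=; rewrite nth_default.
Qed.

Definition cidx (c : option nat) := match c with None => 0%N | Some n => n.+1 end.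

Lemma Dset_dense R F : Cp_xi R F `<=` closure (Dset R).
Proof.
move=> f _.
have /choice [ra hra] : forall (xt : R * nat), exists q : rat, `|ratr q - xt.1| < ee R xt.2.
  move=> [x t] /=; have he := ee_gt0 R t.
  have [q] := @rat_in_itvoo R (x - ee R t) (x + ee R t) ltac:(lra).
  by rewrite in_itv /= => /andP [h1 h2]; exists q; rewrite ltr_norml; lra.
pose d t := mkD R (map (fun n => ra (f (Some n), t)) (iota 0 t), ra (f None, t)).
apply: (@seq_closure _ _ d); last by move=> t; exists (map (fun n => ra (f (Some n), t)) (iota 0 t), ra (f None, t)).
apply: ptws_seq_cvg => c; apply/cvgrPdist_lt => eps heps.
have := ee_cvg R; move=> /cvgrPdist_lt /(_ eps heps) [N _ hN].
exists (maxn N (cidx c)) => // t /= ht.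
have h2 := hN t (leq_trans (leq_maxl _ _) ht).
rewrite /= sub0r normrN ger0_norm in h2; last exact: ltW (ee_gt0 _ _).
have hct : (cidx c <= t)%N := leq_trans (leq_maxr _ _) ht.
clear ht; case: c hct => [n|] /= hct.
  rewrite (nth_map 0%N) ?size_iota // nth_iota // add0n.
  have := hra (f (Some n), t); rewrite /= distrC; lra.
have := hra (f None, t); rewrite /= distrC; lra.
Qed.

Lemma find_int (m : nat -> nat) : (forall k, (m k < m k.+1)%N) ->
  forall i0 n, (m i0 <= n)%N -> exists i, [/\ (i0 <= i)%N, (m i <= n)%N & (n < m i.+1)%N].
Proof.
move=> hm i0 n hn.
have key : forall d, (n < m (i0 + d))%N ->
    exists i, [/\ (i0 <= i)%N, (m i <= n)%N & (n < m i.+1)%N].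
  elim=> [|d IH]; first by rewrite addn0 ltnNge hn.
  case: (ltnP n (m (i0 + d))) => [/IH //|h1 h2].
  by exists (i0 + d)%N; split => //; [exact: leq_addr|rewrite -addnS].
apply: (key n.+1); apply: leq_trans (m_ge hm _); rewrite addnS ltnS; exact: leq_addl.
Qed.

Lemma C_in_Cp (R : realType) F (m : nat -> nat) (kb : nat -> bool) A
  (g : {ptws option nat -> R}) :
  free_filter F -> F A -> (forall k, (m k < m k.+1)%N) ->
  (forall i n, kb i -> (m i <= n)%N -> (n < m i.+1)%N -> ~ A n) ->
  (forall i n, ~~ kb i -> (m i <= n)%N -> (n < m i.+1)%N ->
     `|g (Some n) - g None| <= ee R i *+ 2) ->
  Cp_xi R F g.
Proof.
move=> hF hA hm hkb hg V oV hV.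
have : nbhs (g None) V by apply: open_nbhs_nbhs.
move=> /nbhs_ballP [e he hball].
have he2 : 0 < e / 2 by rewrite divr_gt0.
have := ee_cvg R; move=> /cvgrPdist_lt /(_ _ he2) [N _ hN].
have h2 := hN N (leqnn N).
rewrite /= sub0r normrN ger0_norm in h2; last exact: ltW (ee_gt0 _ _).
exists (A `&` [set n | (m N <= n)%N]); split.
  by have [[_ _ _ hI] _] := hF; apply: hI => //; exact: cofin.
move=> n [hAn hn]; have [i [hi1 hi2 hi3]] := find_int _ hm _ _ hn.
have hki : ~~ kb i by apply/negP => hk; exact: hkb i n hk hi2 hi3 hAn.
have := hg i n hki hi2 hi3; have hmono := ee_mono R _ _ hi1.
move=> hdev; apply: hball; rewrite -ball_normE /ball_ /= distrC.
have : e / 2 * 2 = e by rewrite mulfVK // pnatr_eq0.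
move: hdev; rewrite mulr2n; lra.
Qed.

Theorem mainTheorem9 (R : realType) (F : set (set nat)) :
  free_filter F -> non_meager_filter F ->
  exists D : set {ptws option nat -> R},
    [/\ countable D, D `<=` Cp_xi R F, Cp_xi R F `<=` closure D &
      forall P, P `<=` D -> crowded P ->
        exists Q, [/\ Q `<=` P, crowded Q &
          compact (closure Q `&` Cp_xi R F)]].
Proof.
move=> hF hnm; exists (Dset R); split.
- exact: Dset_countable.
- exact: Dset_Cp.
- exact: Dset_dense.
move=> P hPD [[q0 hq0] hlim].
have /choice [sup hsup] : forall q : {ptws option nat -> R}, exists N,
    P q -> forall n, (N <= n)%N -> q (Some n) = q None.
  move=> q; case: (pselect (P q)) => hq.
    by have [N hN] := Dset_const _ _ (hPD q hq); exists N.
  by exists 0%N.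
have /choice [ch0 hch0] : forall qLk : {ptws option nat -> R} * nat * nat, exists y,
    P qLk.1.1 -> [/\ P y, y <> qLk.1.1,
      `|y None - qLk.1.1 None| < ee R qLk.2.+1 &
      forall n, (n < qLk.1.2)%N -> `|y (Some n) - qLk.1.1 (Some n)| < ee R qLk.2.+1].
  move=> [[q L] k] /=; case: (pselect (P q)) => hq; last by exists q.
  have [y [/eqP yq Py [h1 h2]]] := hlim q hq _ (ptws_box_nbhs q L _ (ee_gt0 R k.+1)).
  exists y => _; split => //; first by rewrite distrC.
  by move=> n hn; rewrite distrC; exact: h2.
pose ch q L k := ch0 (q, L, k).
have Hch : forall q L k, P q -> [/\ P (ch q L k), ch q L k <> q,
   `|ch q L k None - q None| < ee R k.+1 &
   forall n, (n < L)%N -> `|ch q L k (Some n) - q (Some n)| < ee R k.+1].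
  by move=> q L k hq; exact: (hch0 (q, L, k) hq).
have Hsup : forall q, P q -> forall n, (sup q <= n)%N -> q (Some n) = q None.
  by move=> q hq; exact: hsup.
pose m := mm R q0 ch sup.
have hm : forall k, (m k < m k.+1)%N by move=> k; exact: mm_S.
have [A [hA hK]] := talagrand _ _ hnm hm.
pose kb k := `[< forall n, (m k <= n)%N -> (n < m k.+1)%N -> ~ A n >].
have kinf : forall N, exists k, (N <= k)%N /\ kb k.
  by move=> N; have [k [hk1 hk2]] := hK N; exists k; split => //; apply/asboolP.
pose Q := Qs R q0 ch sup kb.
exists Q; split.
- exact: Qs_P hq0 Hch kb.
- exact: Qs_crowded hq0 Hch kb kinf.
have hsub : closure Q `<=` Cp_xi R F.
  move=> g hg; apply: (@C_in_Cp R F m kb A g hF hA hm).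
    by move=> i n /asboolP; apply.
  move=> i n hi h1 h2; apply: (@closure_dev R Q _ _ _ g _ hg) => h [k hk].
  exact: Gl_dev2 hq0 Hsup Hch kb k h i n hk hi h1 h2.
have hbox : closure Q `<=` [set g : {ptws option nat -> R} | forall c, `|g c| <= bnd R q0 ch sup c].
  move=> g hg c; apply: (@closure_abs R Q _ _ g _ hg) => h [k hk].
  exact: Ls_bnd hq0 Hch k h c (Gl_Ls _ _ _ _ _ _ _ hk).
rewrite (setIidl hsub).
have h1 := box_compact R (bnd R q0 ch sup).
have h2 : closed (closure Q) by exact: closed_closure.
have h3 := subclosed_compact h2 h1.
exact: h3.
Qed.
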